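(* Let $\omega\colon\mathbf Z_+\to(0,+\infty)$ be a positive weight, and for $\mu\in\mathbf C$ and $m\ge1$ let \[h_m(\mu,z)=\sum_{n\ge0}\mu^n\big(z^{(6m+4)2^n}-z^{(2m+1)2^n}\big),\qquad h_0(\mu,z)=\sum_{n\ge0}\mu^nz^{2^{n+2}}.\] For every $m\ge0$ and $\mu\in\mathbf C$, $h_m(\mu,\cdot)$ belongs to $\mathcal X_\omega$ if and only if the series $\sum_{n\ge0}|\mu|^{2n}/\omega((2m+1)2^n)$ and $\sum_{n\ge0}|\mu|^{2n}/\omega((6m+4)2^n)$ converge; in this case $\mathcal Th_m(\mu,\cdot)=\mu h_m(\mu,\cdot)$. In particular, if $\omega$ is bounded from below then $h_m(\mu,\cdot)\in\mathcal X_\omega$ for every $m\ge0$ and every $\mu$ in the open unit disk $\mathbf D$; and if $\omega=\omega_0$, where $\omega_0(n)=(n+1)/\pi$, then $h_m(\mu,\cdot)\in\mathcal X_{\omega_0}$ for every $m\ge0$ and every $\mu\in\mathbf C$ with $|\mu|<\sqrt2$.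
   Context: $T\colon\mathbf Z_+\to\mathbf Z_+$ is the modified Collatz map: $T(n)=n/2$ for $n$ even, $T(n)=(3n+1)/2$ for $n$ odd. $\mathcal X_\omega$ is the Hilbert space of holomorphic functions $f(z)=\sum_{n\ge3}c_nz^n$ on the unit disk with $\|f\|_\omega^2=\sum_{n\ge3}|c_n|^2/\omega(n)<\infty$ (the quotient of the weighted Bergman space $\mathcal B^2_\omega$ by $\mathrm{span}[1,z,z^2]$). $\mathcal T$ acts on such power series by $\mathcal T\sum_{n\ge3}c_nz^n=\sum_{j\ge3,\,T(j)\ge3}c_jz^{T(j)}$, i.e. the coefficient of $z^k$ ($k\ge3$) in $\mathcal Tf$ is $\sum_{j\ge3,\,T(j)=k}c_j$. *)

(* Defs.v *)
From Stdlib Require Import Reals Arith.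
From Coquelicot Require Import Coquelicot.
Open Scope R_scope.

Definition collatzT (n : nat) : nat :=
  if Nat.even n then (n / 2)%nat else ((3 * n + 1) / 2)%nat.

(* A power series f(z) = sum_n c_n z^n is represented by its coefficient
   sequence c : nat -> C.  Membership in X_omega: no terms of degree < 3,
   holomorphic on the unit disk (radius of convergence >= 1), and
   ||f||^2 = sum_{n>=3} |c_n|^2 / omega(n) < +oo. *)
Definition in_X (omega : nat -> R) (c : nat -> C) : Prop :=
  (forall n, (n < 3)%nat -> c n = RtoC 0) /\
  (forall r, 0 <= r < 1 -> ex_series (fun n => Cmod (c n) * r ^ n)) /\
  ex_series (fun n => (Cmod (c n)) ^ 2 / omega n).

(* The operator T on coefficient sequences: coefficient of z^k (k >= 3)
   of T f is sum_{j >= 3, T(j) = k} c_j.  Every such j satisfies j <= 2k. *)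
Definition Top (c : nat -> C) (k : nat) : C :=
  if (k <? 3)%nat then RtoC 0
  else sum_n (fun j => if andb (3 <=? j)%nat (collatzT j =? k)%nat then c j else RtoC 0)
             (2 * k).

(* Coefficient of z^k in sum_{n>=0} mu^n z^(a 2^n): since a >= 1 and
   a 2^n > n, only indices n <= k can contribute. *)
Definition lac_coef (a : nat) (mu : C) (k : nat) : C :=
  sum_n (fun n => if (k =? a * 2 ^ n)%nat then Cpow mu n else RtoC 0) k.

Definition hcoef (m : nat) (mu : C) (k : nat) : C :=
  match m with
  | O => lac_coef 4 mu k
  | S _ => Cminus (lac_coef (6 * m + 4) mu k) (lac_coef (2 * m + 1) mu k)
  end.

Definition omega0 (n : nat) : R := INR (n + 1) / PI.

(* Main.v *)
Require Import Defs.
From Stdlib Require Import Reals Arith Lia Lra Psatz Classical.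
From Coquelicot Require Import Coquelicot.
Open Scope R_scope.

Lemma sum_n_zero {G : AbelianMonoid} (f : nat -> G) N :
  (forall n, (n <= N)%nat -> f n = zero) -> sum_n f N = zero.
Proof.
  induction N; intros H.
  - rewrite sum_O; apply H; lia.
  - rewrite sum_Sn, IHN. rewrite H by lia. apply plus_zero_l.
    intros n Hn; apply H; lia.
Qed.

Lemma sum_n_single {G : AbelianMonoid} (f : nat -> G) N p :
  (p <= N)%nat -> (forall n, (n <= N)%nat -> n <> p -> f n = zero) -> sum_n f N = f p.
Proof.
  induction N; intros Hp H.
  - rewrite sum_O. replace p with 0%nat by lia. reflexivity.
  - rewrite sum_Sn. destruct (Nat.eq_dec p (S N)) as [->|Hne].
    + rewrite sum_n_zero. apply plus_zero_l. intros n Hn; apply H; lia.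
    + rewrite IHN by (try lia; intros n Hn Hn'; apply H; lia).
      rewrite (H (S N)) by lia. apply plus_zero_r.
Qed.

Lemma sum_mono (f : nat -> R) (Hf : forall n, 0 <= f n) N N' :
  (N <= N')%nat -> sum_n f N <= sum_n f N'.
Proof.
  induction 1. lra. rewrite sum_Sn. change plus with Rplus. simpl. specialize (Hf (S m)). lra.
Qed.

Lemma sum_flat (f : nat -> R) M K :
  (M <= K)%nat -> (forall k, (M < k <= K)%nat -> f k = 0) -> sum_n f K = sum_n f M.
Proof.
  induction 1; intros Hz. reflexivity.
  rewrite sum_Sn, IHle. rewrite Hz by lia. exact (plus_zero_r _).
  intros k Hk; apply Hz; lia.
Qed.

Lemma ex_series_bounded (f : nat -> R) (Hf : forall n, 0 <= f n) :
  ex_series f <-> exists M, forall N, sum_n f N <= M.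
Proof.
  assert (Hi : forall n, sum_n f n <= sum_n f (S n)) by (intros; apply sum_mono; auto).
  split.
  - intros Hex. destruct Hex as [l Hl]. exists l. intros N. apply (is_lim_seq_incr_compare (sum_n f) l); [exact Hl | exact Hi].
  - intros [M HM]. destruct (ex_finite_lim_seq_incr _ M Hi HM) as [l Hl].
    exists l. exact Hl.
Qed.

Lemma pow2_ge1 n : (1 <= 2 ^ n)%nat.
Proof. induction n; simpl; lia. Qed.

Lemma apow_le a n p : (n <= p)%nat -> (a * 2 ^ n <= a * 2 ^ p)%nat.
Proof. intros; apply Nat.mul_le_mono_l, Nat.pow_le_mono_r; lia. Qed.

Lemma apow_inj a n p : (1 <= a)%nat -> (a * 2 ^ n = a * 2 ^ p)%nat -> n = p.
Proof.
  intros Ha H. apply Nat.mul_cancel_l in H; [|lia]. apply Nat.pow_inj_r in H; lia.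
Qed.

Lemma n_le_apow a n : (1 <= a)%nat -> (n <= a * 2 ^ n)%nat.
Proof.
  intros Ha. pose proof (Nat.pow_gt_lin_r 2 n ltac:(lia)).
  pose proof (apow_le a 0 n ltac:(lia)). simpl in H0. nia.
Qed.

Lemma between_not a N k : (a * 2 ^ N < k < a * 2 ^ S N)%nat -> forall p, k <> (a * 2 ^ p)%nat.
Proof.
  intros Hk p Hp. destruct (Nat.le_gt_cases p N).
  - pose proof (apow_le a p N H). lia.
  - pose proof (apow_le a (S N) p H). lia.
Qed.

Lemma sparse_sum (a : nat) (F u : nat -> R) (Ha : (1 <= a)%nat)
  (HF1 : forall n, F (a * 2 ^ n)%nat = u n)
  (HF0 : forall k, (forall n, k <> (a * 2 ^ n)%nat) -> F k = 0) :
  forall N, sum_n F (a * 2 ^ N)%nat = sum_n u N.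
Proof.
  induction N.
  - rewrite sum_O. replace (a * 2 ^ 0)%nat with a by (simpl; lia).
    rewrite sum_n_single with (p := a) by
      (try lia; intros n Hn Hn'; apply HF0; intros p Hp;
       pose proof (apow_le a 0 p ltac:(lia)); simpl in *; lia).
    rewrite <- (HF1 0%nat). f_equal. simpl; lia.
  - assert (Hpos : (a * 2 ^ N < a * 2 ^ S N)%nat) by (simpl; pose proof (pow2_ge1 N); nia).
    destruct (a * 2 ^ S N)%nat as [|K] eqn:EK; [lia|].
    rewrite sum_Sn, (sum_flat F (a * 2 ^ N)%nat K), IHN by
      (try lia; intros k Hk; apply HF0; apply (between_not a N); lia).
    rewrite sum_Sn, <- EK, HF1. reflexivity.
Qed.

Lemma sparse_iff (a : nat) (F u : nat -> R) (Ha : (1 <= a)%nat)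
  (HF : forall k, 0 <= F k)
  (HF1 : forall n, F (a * 2 ^ n)%nat = u n)
  (HF0 : forall k, (forall n, k <> (a * 2 ^ n)%nat) -> F k = 0) :
  ex_series F <-> ex_series u.
Proof.
  assert (Hu : forall n, 0 <= u n) by (intros; rewrite <- HF1; auto).
  rewrite (ex_series_bounded F HF), (ex_series_bounded u Hu).
  split; intros [M HM]; exists M; intros N.
  - rewrite <- (sparse_sum a F u Ha HF1 HF0). apply HM.
  - eapply Rle_trans; [apply (sum_mono F HF N (a * 2 ^ N)); apply n_le_apow; auto|].
    rewrite (sparse_sum a F u Ha HF1 HF0). apply HM.
Qed.

Lemma LC1 a mu n : (1 <= a)%nat -> lac_coef a mu (a * 2 ^ n)%nat = Cpow mu n.
Proof.
  intros Ha. unfold lac_coef.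
  rewrite sum_n_single with (p := n).
  - rewrite Nat.eqb_refl. reflexivity.
  - apply n_le_apow; auto.
  - intros p _ Hp. destruct (Nat.eqb_spec (a * 2 ^ n) (a * 2 ^ p)) as [E|E].
    + apply apow_inj in E; auto. lia.
    + reflexivity.
Qed.

Lemma LC0 a mu k : (forall n, k <> (a * 2 ^ n)%nat) -> lac_coef a mu k = RtoC 0.
Proof.
  intros H. unfold lac_coef. apply (sum_n_zero (G := C_AbelianMonoid)). intros n _.
  destruct (Nat.eqb_spec k (a * 2 ^ n)) as [E|E]. exfalso; eapply H; eauto. reflexivity.
Qed.

Lemma LC_double a mu k : (1 <= a)%nat -> (2 * k <> a)%nat ->
  lac_coef a mu (2 * k) = Cmult mu (lac_coef a mu k).
Proof.
  intros Ha Hk. destruct (classic (exists n, k = (a * 2 ^ n)%nat)) as [[n Hn]|Hn].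
  - replace (2 * k)%nat with (a * 2 ^ S n)%nat by (simpl; lia). subst k.
    rewrite !LC1 by auto. reflexivity.
  - rewrite (LC0 a mu k), LC0.
    + apply injective_projections; simpl; ring.
    + intros [|p] Hp; simpl in Hp. lia. apply Hn. exists p. lia.
    + intros p Hp; apply Hn; exists p; auto.
Qed.

Lemma oddpart n p x y : (2 ^ n * x = 2 ^ p * (2 * y + 1))%nat ->
  exists q, p = (n + q)%nat /\ x = (2 ^ q * (2 * y + 1))%nat.
Proof.
  revert p. induction n; intros p H.
  - exists p. simpl in *. lia.
  - destruct p as [|p].
    + simpl in H. lia.
    + simpl in H. destruct (IHn p) as [q [H1 H2]]. lia. exists q. lia.
Qed.

Lemma not32 m p : (1 <= m)%nat -> (3 * m + 2 <> (2 * m + 1) * 2 ^ p)%nat.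
Proof.
  intros Hm. destruct p. simpl; lia. rewrite Nat.pow_succ_r'.
  pose proof (pow2_ge1 p).
  assert ((2 * m + 1) * 1 <= (2 * m + 1) * 2 ^ p)%nat by (apply Nat.mul_le_mono_l; lia).
  replace ((2 * m + 1) * (2 * 2 ^ p))%nat with (2 * ((2 * m + 1) * 2 ^ p))%nat by ring.
  lia.
Qed.

Lemma disj m n p : (1 <= m)%nat -> ((6 * m + 4) * 2 ^ n <> (2 * m + 1) * 2 ^ p)%nat.
Proof.
  intros Hm H. destruct (oddpart (S n) p (3 * m + 2) m) as [q [_ Hq]].
  simpl. lia. apply (not32 m q Hm). lia.
Qed.

Lemma collatz_pre j k : collatzT j = k ->
  j = (2 * k)%nat \/ (exists t, j = (2 * t + 1)%nat /\ (3 * j + 1 = 2 * k)%nat).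
Proof.
  unfold collatzT. destruct (Nat.even j) eqn:E; intros H.
  - left. apply Nat.even_spec in E. destruct E as [t ->].
    rewrite Nat.mul_comm, Nat.div_mul in H by lia. lia.
  - right. assert (Nat.odd j = true) by (rewrite <- Nat.negb_even, E; reflexivity).
    apply Nat.odd_spec in H0. destruct H0 as [t ->]. exists t. split; auto.
    replace (3 * (2 * t + 1) + 1)%nat with ((3 * t + 2) * 2)%nat in H by lia.
    rewrite Nat.div_mul in H by lia. lia.
Qed.

Lemma collatz_even k : collatzT (2 * k) = k.
Proof.
  unfold collatzT. replace (Nat.even (2 * k)) with true.
  rewrite Nat.mul_comm, Nat.div_mul; lia.
  symmetry; apply Nat.even_spec; exists k; auto.
Qed.

Lemma collatz_odd t : collatzT (2 * t + 1) = (3 * t + 2)%nat.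
Proof.
  unfold collatzT. replace (Nat.even (2 * t + 1)) with false.
  replace (3 * (2 * t + 1) + 1)%nat with ((3 * t + 2) * 2)%nat by lia.
  rewrite Nat.div_mul; lia.
  symmetry. rewrite <- Nat.negb_odd. replace (Nat.odd (2 * t + 1)) with true. reflexivity.
  symmetry; apply Nat.odd_spec; exists t; auto.
Qed.

Lemma pow_decr s n m : 0 <= s <= 1 -> (n <= m)%nat -> s ^ m <= s ^ n.
Proof.
  intros Hs Hnm. replace m with (n + (m - n))%nat by lia. rewrite pow_add.
  assert (0 <= s ^ n) by (apply pow_le; lra).
  assert (s ^ (m - n) <= 1) by (rewrite <- (pow1 (m - n)); apply pow_incr; lra).
  assert (0 <= s ^ (m - n)) by (apply pow_le; lra). nra.
Qed.

Lemma geom_fast (x r : R) (a : nat) : 0 <= x -> 0 <= r < 1 -> (1 <= a)%nat ->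
  ex_series (fun n => x ^ n * r ^ (a * 2 ^ n)).
Proof.
  intros Hx Hr Ha.
  set (s := Rmax r (1/2)). set (M := x + 1).
  assert (Hs : 0 < s < 1) by (unfold s; split; [apply Rlt_le_trans with (1/2); [lra|apply Rmax_r] | apply Rmax_lub_lt; lra]).
  assert (Hrs : r <= s) by apply Rmax_l.
  set (w := fun n => M ^ n * s ^ (2 ^ n)).
  assert (Hw : forall n, 0 < w n) by (intros; unfold w; apply Rmult_lt_0_compat; apply pow_lt; unfold M; lra).
  assert (Hex : ex_series (fun n => Rabs (w n))).
  { apply (ex_series_DAlembert w 0). lra. intros n; specialize (Hw n); lra.
    apply is_lim_seq_ext with (u := fun n => M * s ^ (2 ^ n)).
    { intros n. unfold w. rewrite Rabs_pos_eq.
      - rewrite Nat.pow_succ_r', Nat.mul_comm, pow_mult. rewrite <- tech_pow_Rmult. field.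
        split; apply pow_nonzero; unfold M; lra.
      - apply Rlt_le, Rdiv_lt_0_compat; [apply (Hw (S n))|apply (Hw n)]. }
    apply is_lim_seq_le_le with (u := fun _ => 0) (w := fun n => M * s ^ n).
    - intros n. split.
      + apply Rmult_le_pos. unfold M; lra. apply pow_le; lra.
      + apply Rmult_le_compat_l. unfold M; lra. apply pow_decr. lra.
        apply Nat.lt_le_incl, Nat.pow_gt_lin_r; lia.
    - apply is_lim_seq_const.
    - replace (Finite 0) with (Rbar_mult M 0) by (simpl; f_equal; ring).
      apply is_lim_seq_scal_l. apply is_lim_seq_geom. rewrite Rabs_pos_eq; lra. }
  apply (@ex_series_le R_AbsRing R_CompleteNormedModule _ _) with (2 := Hex).
  intros n. change norm with Rabs. simpl. rewrite Rabs_pos_eq.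
  2:{ apply Rmult_le_pos; apply pow_le; lra. }
  rewrite (Rabs_pos_eq (w n)) by (specialize (Hw n); lra). unfold w.
  apply Rmult_le_compat. apply pow_le; lra. apply pow_le; lra.
  apply pow_incr; unfold M; lra.
  apply Rle_trans with (s ^ (a * 2 ^ n)). apply pow_incr; lra.
  apply pow_decr. lra. pose proof (pow2_ge1 n). nia.
Qed.

Lemma lac_small a mu k : (k < a)%nat -> lac_coef a mu k = RtoC 0.
Proof.
  intros H. apply LC0. intros n Hn. pose proof (apow_le a 0 n ltac:(lia)). simpl in *. lia.
Qed.

Lemma lac_sq (omega : nat -> R) (Hom : forall n, (0 < n)%nat -> 0 < omega n) a mu :
  (1 <= a)%nat ->
  (ex_series (fun k => Cmod (lac_coef a mu k) ^ 2 / omega k) <->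
   ex_series (fun n => Cmod mu ^ (2 * n) / omega (a * 2 ^ n)%nat)).
Proof.
  intros Ha. apply (sparse_iff a); auto.
  - intros [|k].
    + rewrite lac_small by lia. rewrite Cmod_0. unfold Rdiv. right; ring.
    + apply Rmult_le_pos. apply pow2_ge_0. apply Rlt_le, Rinv_0_lt_compat, Hom; lia.
  - intros n. rewrite LC1, Cmod_pow by auto. rewrite <- pow_mult.
    replace (n * 2)%nat with (2 * n)%nat by lia. reflexivity.
  - intros k Hk. rewrite LC0 by auto. rewrite Cmod_0. unfold Rdiv; ring.
Qed.

Lemma lac_holo a mu r : (1 <= a)%nat -> 0 <= r < 1 ->
  ex_series (fun k => Cmod (lac_coef a mu k) * r ^ k).
Proof.
  intros Ha Hr. apply (sparse_iff a _ (fun n => Cmod mu ^ n * r ^ (a * 2 ^ n))); auto.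
  - intros k. apply Rmult_le_pos. apply Cmod_ge_0. apply pow_le; lra.
  - intros n. rewrite LC1, Cmod_pow by auto. reflexivity.
  - intros k Hk. rewrite LC0 by auto. rewrite Cmod_0. ring.
  - apply geom_fast; auto. apply Cmod_ge_0.
Qed.

Lemma hcoef_S m mu k : (1 <= m)%nat ->
  hcoef m mu k = Cminus (lac_coef (6 * m + 4) mu k) (lac_coef (2 * m + 1) mu k).
Proof. destruct m. lia. reflexivity. Qed.

Lemma h_small m mu n : (n < 3)%nat -> hcoef m mu n = RtoC 0.
Proof.
  intros Hn. destruct m as [|m'].
  - apply lac_small; lia.
  - rewrite hcoef_S by lia. rewrite !lac_small by lia.
    apply injective_projections; simpl; ring.
Qed.

Lemma h_holo m mu r : 0 <= r < 1 -> ex_series (fun k => Cmod (hcoef m mu k) * r ^ k).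
Proof.
  intros Hr. destruct m as [|m'].
  - apply lac_holo; auto.
  - set (m := S m').
    apply (@ex_series_le R_AbsRing R_CompleteNormedModule) with
      (b := fun k => plus (Cmod (lac_coef (6 * m + 4) mu k) * r ^ k)
                          (Cmod (lac_coef (2 * m + 1) mu k) * r ^ k)).
    + intros k. rewrite hcoef_S by (unfold m; lia).
      change norm with Rabs. change plus with Rplus. cbv beta.
      assert (0 <= r ^ k) by (apply pow_le; lra).
      rewrite Rabs_pos_eq by (apply Rmult_le_pos; auto; apply Cmod_ge_0).
      unfold Cminus.
      pose proof (Cmod_triangle (lac_coef (6 * m + 4) mu k) (- lac_coef (2 * m + 1) mu k)).
      rewrite Cmod_opp in H0. nra.
    + apply (@ex_series_plus R_AbsRing R_NormedModule); apply lac_holo; auto; lia.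
Qed.

Lemma shift_v (omega : nat -> R) mu :
  ex_series (fun n => Cmod mu ^ (2 * n) / omega (4 * 2 ^ n)%nat) ->
  ex_series (fun n => Cmod mu ^ (2 * n) / omega ((2 * 0 + 1) * 2 ^ n)%nat).
Proof.
  intros H. apply (ex_series_incr_n _ 2).
  apply (@ex_series_ext R_AbsRing R_NormedModule) with
    (a := fun n => (Cmod mu ^ (2 * n) / omega (4 * 2 ^ n)%nat) * Cmod mu ^ 4).
  - intros n. replace ((2 * 0 + 1) * 2 ^ (2 + n))%nat with (4 * 2 ^ n)%nat
      by (rewrite Nat.pow_add_r; simpl; lia).
    replace (2 * (2 + n))%nat with (2 * n + 4)%nat by lia. rewrite pow_add.
    match goal with |- ?x = ?y => change (@eq R x y) end. unfold Rdiv; ring.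
  - apply ex_series_scal_r; auto.
Qed.

Lemma sq_nonneg (omega : nat -> R) (Hom : forall n, (0 < n)%nat -> 0 < omega n) (c : C) k :
  (k = 0%nat -> c = RtoC 0) -> 0 <= Cmod c ^ 2 / omega k.
Proof.
  intros H. destruct k.
  - rewrite H, Cmod_0 by auto. unfold Rdiv; right; ring.
  - apply Rmult_le_pos. apply pow2_ge_0. apply Rlt_le, Rinv_0_lt_compat, Hom; lia.
Qed.

Lemma h_sq (omega : nat -> R) (Hom : forall n, (0 < n)%nat -> 0 < omega n) m mu :
  ex_series (fun k => Cmod (hcoef m mu k) ^ 2 / omega k) <->
  (ex_series (fun n => Cmod mu ^ (2 * n) / omega ((2 * m + 1) * 2 ^ n)%nat) /\
   ex_series (fun n => Cmod mu ^ (2 * n) / omega ((6 * m + 4) * 2 ^ n)%nat)).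
Proof.
  destruct m as [|m'].
  - transitivity (ex_series (fun n => Cmod mu ^ (2 * n) / omega (4 * 2 ^ n)%nat)).
    + exact (lac_sq omega Hom 4 mu ltac:(lia)).
    + split. intros H; split; auto. apply shift_v; auto. intros [_ H]; exact H.
  - set (m := S m'). assert (Hm : (1 <= m)%nat) by (unfold m; lia).
    set (F1 := fun k => Cmod (lac_coef (6 * m + 4) mu k) ^ 2 / omega k).
    set (F2 := fun k => Cmod (lac_coef (2 * m + 1) mu k) ^ 2 / omega k).
    assert (HF1 : forall k, 0 <= F1 k) by
      (intros k; apply sq_nonneg; auto; intros ->; apply lac_small; lia).
    assert (HF2 : forall k, 0 <= F2 k) by
      (intros k; apply sq_nonneg; auto; intros ->; apply lac_small; lia).
    assert (HF : forall k, Cmod (hcoef m mu k) ^ 2 / omega k = F1 k + F2 k).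
    { intros k. rewrite hcoef_S by auto. unfold F1, F2.
      destruct (classic (exists n, k = ((6 * m + 4) * 2 ^ n)%nat)) as [[n Hn]|Hn].
      - rewrite (LC0 (2 * m + 1) mu k).
        + replace (lac_coef (6 * m + 4) mu k - RtoC 0)%C with (lac_coef (6 * m + 4) mu k)
            by (apply injective_projections; simpl; ring).
          rewrite Cmod_0. unfold Rdiv; ring.
        + intros p Hp. apply (disj m n p Hm). lia.
      - rewrite (LC0 (6 * m + 4) mu k).
        + replace (RtoC 0 - lac_coef (2 * m + 1) mu k)%C with (- lac_coef (2 * m + 1) mu k)%C
            by (apply injective_projections; simpl; ring).
          rewrite Cmod_opp, Cmod_0. unfold Rdiv; ring.
        + intros p Hp. apply Hn. exists p. auto. }
    rewrite <- (lac_sq omega Hom (2 * m + 1) mu) by lia.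
    rewrite <- (lac_sq omega Hom (6 * m + 4) mu) by lia.
    fold F1 F2. split.
    + intros H. split.
      * apply (@ex_series_le R_AbsRing R_CompleteNormedModule) with (2 := H).
        intros k. change norm with Rabs. rewrite Rabs_pos_eq by auto. rewrite HF.
        specialize (HF1 k). specialize (HF2 k). lra.
      * apply (@ex_series_le R_AbsRing R_CompleteNormedModule) with (2 := H).
        intros k. change norm with Rabs. rewrite Rabs_pos_eq by auto. rewrite HF.
        specialize (HF1 k). specialize (HF2 k). lra.
    + intros [H2 H1].
      apply (@ex_series_ext R_AbsRing R_NormedModule) with (a := fun k => plus (F1 k) (F2 k)).
      intros k; rewrite HF; reflexivity.
      apply (@ex_series_plus R_AbsRing R_NormedModule); auto.
Qed.

Lemma part1 (omega : nat -> R) (Hom : forall n, (0 < n)%nat -> 0 < omega n) m mu :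
  in_X omega (hcoef m mu) <->
  (ex_series (fun n => Cmod mu ^ (2 * n) / omega ((2 * m + 1) * 2 ^ n)%nat) /\
   ex_series (fun n => Cmod mu ^ (2 * n) / omega ((6 * m + 4) * 2 ^ n)%nat)).
Proof.
  rewrite <- h_sq by auto. unfold in_X. split.
  - intros [_ [_ H]]; exact H.
  - intros H. split; [|split]; auto.
    + intros; apply h_small; auto.
    + intros; apply h_holo; auto.
Qed.

Ltac ceq := apply injective_projections; simpl; ring.

Lemma Top_eval (c : nat -> C) k j0 : (3 <= k)%nat -> (exists t, j0 = 2 * t + 1)%nat ->
  (3 <= j0)%nat -> (forall j, (exists t, j = 2 * t + 1)%nat -> j <> j0 -> c j = RtoC 0) ->
  Top c k = Cplus (c (2 * k)%nat) (if (collatzT j0 =? k)%nat then c j0 else RtoC 0).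
Proof.
  intros Hk [t0 Ht0] Hj0 Hc. unfold Top.
  replace (k <? 3)%nat with false by (symmetry; apply Nat.ltb_ge; lia).
  destruct (Nat.eqb_spec (collatzT j0) k) as [E|E].
  - assert (Hle : (j0 <= 2 * k)%nat) by (destruct (collatz_pre j0 k E) as [|[t [_ ?]]]; lia).
    rewrite (sum_n_ext_loc _ (fun j => plus (if (j =? 2 * k)%nat then c (2 * k)%nat else RtoC 0)
                                          (if (j =? j0)%nat then c j0 else RtoC 0))).
    + rewrite sum_n_plus. rewrite (sum_n_single _ _ (2 * k)%nat), (sum_n_single _ _ j0); auto.
      * rewrite !Nat.eqb_refl. reflexivity.
      * intros n _ Hn. destruct (Nat.eqb_spec n j0); [lia|reflexivity].
      * intros n _ Hn. destruct (Nat.eqb_spec n (2 * k)); [lia|reflexivity].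
    + intros j Hj.
      destruct (Nat.eqb_spec j (2 * k)); destruct (Nat.eqb_spec j j0); try lia.
      * subst j. rewrite collatz_even, Nat.eqb_refl.
        replace (3 <=? 2 * k)%nat with true by (symmetry; apply Nat.leb_le; lia).
        simpl. unfold plus; simpl. ceq.
      * subst j. rewrite E, Nat.eqb_refl.
        replace (3 <=? j0)%nat with true by (symmetry; apply Nat.leb_le; lia).
        simpl. unfold plus; simpl. ceq.
      * destruct (3 <=? j)%nat; destruct (Nat.eqb_spec (collatzT j) k) as [E'|E']; simpl;
          try (unfold plus; simpl; ceq).
        destruct (collatz_pre j k E') as [|[t [Ht _]]]; [lia|].
        rewrite Hc by eauto. unfold plus; simpl; ceq.
  - rewrite (sum_n_ext_loc _ (fun j => if (j =? 2 * k)%nat then c (2 * k)%nat else RtoC 0)).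
    + rewrite (sum_n_single _ _ (2 * k)%nat); auto.
      * rewrite !Nat.eqb_refl. ceq.
      * intros n _ Hn. destruct (Nat.eqb_spec n (2 * k)); [lia|reflexivity].
    + intros j Hj.
      destruct (Nat.eqb_spec j (2 * k)).
      * subst j. rewrite collatz_even, Nat.eqb_refl.
        replace (3 <=? 2 * k)%nat with true by (symmetry; apply Nat.leb_le; lia).
        reflexivity.
      * destruct (3 <=? j)%nat; destruct (Nat.eqb_spec (collatzT j) k) as [E'|E']; simpl;
          try reflexivity.
        destruct (collatz_pre j k E') as [|[t [Ht _]]]; [lia|].
        destruct (Nat.eq_dec j j0) as [ej|ej]. rewrite ej in E'; contradiction.
        rewrite Hc by eauto. reflexivity.
Qed.

Lemma part2 m mu k : Top (hcoef m mu) k = Cmult mu (hcoef m mu k).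
Proof.
  destruct (Nat.lt_ge_cases k 3) as [Hk|Hk].
  { unfold Top. replace (k <? 3)%nat with true by (symmetry; apply Nat.ltb_lt; lia).
    rewrite h_small by auto. ceq. }
  destruct m as [|m'].
  - change (hcoef 0 mu) with (lac_coef 4 mu).
    rewrite (Top_eval _ k 3); auto.
    + rewrite (lac_small 4 mu 3) by lia. rewrite LC_double by lia.
      destruct (collatzT 3 =? k)%nat; ceq.
    + exists 1%nat; lia.
    + intros j [t Ht] _. apply LC0. intros p Hp. lia.
  - set (m := S m'). assert (Hm : (1 <= m)%nat) by (unfold m; lia).
    assert (E6 : forall p, ((6 * m + 4) * 2 ^ p = 2 * ((3 * m + 2) * 2 ^ p))%nat) by (intros; ring).
    assert (Hc : forall k, hcoef (S m') mu k =
                 Cminus (lac_coef (6 * m + 4) mu k) (lac_coef (2 * m + 1) mu k))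
      by (intros; apply hcoef_S; auto).
    rewrite (Top_eval _ k (2 * m + 1)); auto; [| exists m; lia | lia |].
    2:{ intros j [t Ht] Hne. rewrite Hc. rewrite (LC0 (6 * m + 4)), (LC0 (2 * m + 1)).
        ceq.
        - intros [|p] Hp. simpl in Hp; lia.
          rewrite Nat.pow_succ_r' in Hp.
          replace ((2 * m + 1) * (2 * 2 ^ p))%nat with (2 * ((2 * m + 1) * 2 ^ p))%nat in Hp by ring.
          lia.
        - intros p Hp. rewrite E6 in Hp. lia. }
    rewrite !Hc. rewrite collatz_odd.
    rewrite (lac_small (6 * m + 4) mu (2 * m + 1)) by lia.
    replace (lac_coef (2 * m + 1) mu (2 * m + 1)) with (RtoC 1)
      by (symmetry; transitivity (lac_coef (2 * m + 1) mu ((2 * m + 1) * 2 ^ 0)%nat);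
          [f_equal; simpl; lia | rewrite LC1 by lia; reflexivity]).
    destruct (Nat.eqb_spec (3 * m + 2) k) as [Ek|Ek].
    + subst k. rewrite (LC_double (2 * m + 1)) by lia.
      replace (2 * (3 * m + 2))%nat with ((6 * m + 4) * 2 ^ 0)%nat by (simpl; lia).
      rewrite LC1 by lia.
      replace ((6 * m + 4) * 2 ^ 0)%nat with (2 * (3 * m + 2))%nat by (simpl; lia).
      rewrite (LC0 (2 * m + 1) mu (3 * m + 2)) by (intros p; apply not32; auto).
      rewrite (lac_small (6 * m + 4) mu (3 * m + 2)) by lia.
      simpl Cpow. ceq.
    + rewrite !LC_double by lia. ceq.
Qed.

Lemma bound_series (omega : nat -> R) b (Hb : 0 < b) (Hlow : forall n, (0 < n)%nat -> b <= omega n)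
  a mu : (1 <= a)%nat -> Cmod mu < 1 ->
  ex_series (fun n => Cmod mu ^ (2 * n) / omega (a * 2 ^ n)%nat).
Proof.
  intros Ha Hmu. pose proof (Cmod_ge_0 mu).
  apply (@ex_series_le R_AbsRing R_CompleteNormedModule) with (b := fun n => (Cmod mu ^ 2) ^ n * / b).
  - intros n. change norm with Rabs. cbv beta.
    assert (Hpos : (0 < a * 2 ^ n)%nat) by (pose proof (pow2_ge1 n); nia).
    assert (0 <= Cmod mu ^ (2 * n)) by (apply pow_le; auto).
    pose proof (Hlow _ Hpos).
    rewrite Rabs_pos_eq.
    + rewrite <- pow_mult. unfold Rdiv. apply Rmult_le_compat_l; auto.
      apply Rinv_le_contravar; auto.
    + unfold Rdiv. apply Rmult_le_pos; auto. apply Rlt_le, Rinv_0_lt_compat. lra.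
  - apply ex_series_scal_r. apply ex_series_geom. rewrite Rabs_pos_eq by nra. nra.
Qed.

Lemma omega0_pos n : 0 < omega0 n.
Proof. unfold omega0. apply Rdiv_lt_0_compat. apply lt_0_INR; lia. apply PI_RGT_0. Qed.

Lemma omega0_series a mu : (1 <= a)%nat -> Cmod mu < sqrt 2 ->
  ex_series (fun n => Cmod mu ^ (2 * n) / omega0 (a * 2 ^ n)%nat).
Proof.
  intros Ha Hmu. pose proof (Cmod_ge_0 mu).
  assert (Hq : Cmod mu ^ 2 < 2).
  { pose proof (pow2_sqrt 2 ltac:(lra)). pose proof (sqrt_pos 2). nra. }
  apply (@ex_series_le R_AbsRing R_CompleteNormedModule) with (b := fun n => PI * (Cmod mu ^ 2 / 2) ^ n).
  - intros n. change norm with Rabs. cbv beta.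
    pose proof (omega0_pos (a * 2 ^ n)).
    assert (0 <= Cmod mu ^ (2 * n)) by (apply pow_le; auto).
    rewrite Rabs_pos_eq by (unfold Rdiv; apply Rmult_le_pos; auto; apply Rlt_le, Rinv_0_lt_compat; auto).
    unfold omega0 in *. rewrite pow_mult.
    unfold Rdiv. rewrite Rpow_mult_distr, pow_inv.
    pose proof PI_RGT_0.
    assert (HP : 0 < 2 ^ n) by (apply pow_lt; lra).
    assert (HD : 2 ^ n <= INR (a * 2 ^ n + 1)).
    { replace (2 ^ n) with (INR (2 ^ n)) by (rewrite pow_INR; f_equal; simpl; ring).
      apply le_INR. pose proof (pow2_ge1 n). nia. }
    set (D := INR (a * 2 ^ n + 1)) in *. set (X := (Cmod mu ^ 2) ^ n).
    assert (0 <= X) by (apply pow_le; nra).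
    rewrite Rinv_mult, Rinv_inv.
    assert (/ D <= / 2 ^ n) by (apply Rinv_le_contravar; auto).
    replace (X * (/ D * PI)) with ((X * PI) * / D) by ring. replace (PI * (X * / 2 ^ n)) with ((X * PI) * / 2 ^ n) by ring. apply Rmult_le_compat_l; nra.
  - apply (@ex_series_scal R_AbsRing R_NormedModule PI). apply ex_series_geom.
    rewrite Rabs_pos_eq by nra. lra.
Qed.

Theorem proposition2p3 (omega : nat -> R)
  (Homega : forall n : nat, (0 < n)%nat -> 0 < omega n) :
  (forall (m : nat) (mu : C),
     (in_X omega (hcoef m mu) <->
        (ex_series (fun n => Cmod mu ^ (2 * n) / omega ((2 * m + 1) * 2 ^ n)%nat) /\
         ex_series (fun n => Cmod mu ^ (2 * n) / omega ((6 * m + 4) * 2 ^ n)%nat))) /\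
     (in_X omega (hcoef m mu) ->
        forall k : nat, Top (hcoef m mu) k = Cmult mu (hcoef m mu k))) /\
  ((exists b : R, 0 < b /\ forall n : nat, (0 < n)%nat -> b <= omega n) ->
     forall (m : nat) (mu : C), Cmod mu < 1 -> in_X omega (hcoef m mu)) /\
  (forall (m : nat) (mu : C), Cmod mu < sqrt 2 -> in_X omega0 (hcoef m mu)).
Proof.
  split; [|split].
  - intros m mu. split.
    + apply part1; auto.
    + intros _ k. apply part2.
  - intros [b [Hb Hlow]] m mu Hmu. apply part1; auto.
    split; apply (bound_series omega b Hb Hlow); auto; lia.
  - intros m mu Hmu. apply part1.
    + intros; apply omega0_pos.
    + split; apply omega0_series; auto; lia.
Qed.
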